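(* Let $M$ and $M'$ be two stable matchings in an instance $I$ of SPA-S, and let $M^\lor$ be the assignment defined from $M,M'$ in the context. Then $M^\lor$ is a stable matching.
   Context: An instance $I$ of SPA-S consists of a finite set $\mathcal{S}$ of students, a finite set $\mathcal{P}$ of projects and a finite set $\mathcal{L}$ of lecturers. Each student $s_i$ ranks a subset $A_i\subseteq\mathcal{P}$ (its acceptable projects) in strict order. Each project is offered by exactly one lecturer; lecturer $l_k$ offers a nonempty set $P_k\subseteq\mathcal{P}$, the $P_k$ partitioning $\mathcal{P}$. Each lecturer $l_k$ ranks in strict order the students who find at least one project of $P_k$ acceptable. Projects have capacities $c_j\in\mathbb{Z}^+$, lecturers have capacities $d_k\in\mathbb{Z}^+$ with $\max\{c_j:p_j\in P_k\}\le d_k\le\sum\{c_j:p_j\in P_k\}$. A pair $(s_i,p_j)$, $p_j$ offered by $l_k$, is acceptable if $p_j\in A_i$ and $s_i$ is on $l_k$'s list. A matching $M$ is a set of acceptable pairs with each student in at most one pair, $|M(p_j)|\le c_j$, $|M(l_k)|\le d_k$, where for an assignment $M$ (a set of acceptable pairs), $M(s_i)$, $M(p_j)$, $M(l_k)$ denote the project of $s_i$, the students assigned to $p_j$, and the students assigned to projects of $l_k$. Undersubscribed/full means fewer than/exactly capacity many assigned students. An acceptable pair $(s_i,p_j)\notin M$ ($p_j$ offered by $l_k$) blocks $M$ if ($s_i$ is unassigned or prefers $p_j$ to $M(s_i)$) and one of: (P1) $p_j$ and $l_k$ undersubscribed; (P2) $p_j$ undersubscribed, $l_k$ full, $s_i\in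 M(l_k)$; (P3) $p_j$ undersubscribed, $l_k$ full, $l_k$ prefers $s_i$ to the worst student of $M(l_k)$; (P4) $p_j$ full and $l_k$ prefers $s_i$ to the worst student of $M(p_j)$. $M$ is stable if it is a matching with no blocking pair. Given stable matchings $M,M'$, $M^\lor$ is the assignment in which each student unassigned in both $M$ and $M'$ is unassigned, each student assigned to the same project in both is assigned to that project, and every other student is assigned to the worse (in her preference) of her projects in $M$ and $M'$. *)

(* Defs.v *)
From mathcomp Require Import all_boot.
Set Implicit Arguments.
Unset Strict Implicit.
Unset Printing Implicit Defensive.

Record SPAS (S P L : finType) := mkSPAS {
  offerer : P -> L;
  spref   : S -> seq P;
  lpref   : L -> seq S;
  pcap    : P -> nat;
  lcap    : L -> nat
}.

Section Defs.
Variables (S P L : finType) (I : SPAS S P L).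

Definition offers (l : L) : {set P} := [set p | offerer I p == l].

Definition wf_SPAS : Prop :=
  [/\ (forall s, uniq (spref I s)),
      (forall l, uniq (lpref I l)),
      (forall l s, (s \in lpref I l) =
                   has (fun p => offerer I p == l) (spref I s)),
      (forall l, offers l != set0) &
      [/\ (forall p, 0 < pcap I p),
      (forall l, 0 < lcap I l) &
      (forall l, (\max_(p in offers l) pcap I p <= lcap I l)
                 /\ (lcap I l <= \sum_(p in offers l) pcap I p))]].

Definition sprefers (s : S) (p q : P) : bool :=
  index p (spref I s) < index q (spref I s).

Definition lprefers (l : L) (s t : S) : bool :=
  index s (lpref I l) < index t (lpref I l).

Definition acceptable (s : S) (p : P) : bool :=
  (p \in spref I s) && (s \in lpref I (offerer I p)).

Implicit Type M : {set S * P}.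

Definition Ms M (s : S) : option P := [pick p | (s, p) \in M].
Definition Mp M (p : P) : {set S} := [set s | (s, p) \in M].
Definition Ml M (l : L) : {set S} :=
  [set s | [exists p, ((s, p) \in M) && (offerer I p == l)]].

Definition matching M : Prop :=
  [/\ (forall x, x \in M -> acceptable x.1 x.2),
      (forall s, #|[set p | (s, p) \in M]| <= 1),
      (forall p, #|Mp M p| <= pcap I p) &
      (forall l, #|Ml M l| <= lcap I l)].

Definition worst (l : L) (A : {set S}) : option S :=
  [pick w in A | [forall t in A, index t (lpref I l) <= index w (lpref I l)]].

Definition prefers_to_worst (l : L) (s : S) (A : {set S}) : bool :=
  if worst l A is Some w then lprefers l s w else false.

Definition blocks M (s : S) (p : P) : bool :=
  let l := offerer I p in
  [&& acceptable s p, (s, p) \notin M,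
      (if Ms M s is Some q then sprefers s p q else true) &
      [|| (#|Mp M p| < pcap I p) && (#|Ml M l| < lcap I l)
        , [&& #|Mp M p| < pcap I p, #|Ml M l| == lcap I l & s \in Ml M l]
        , [&& #|Mp M p| < pcap I p, #|Ml M l| == lcap I l &
              prefers_to_worst l s (Ml M l)]
        | (#|Mp M p| == pcap I p) && prefers_to_worst l s (Mp M p)]].

Definition stable M : Prop := matching M /\ forall s p, ~~ blocks M s p.

(* M^\lor : each student gets the worse of her projects in M and M' *)
Definition vee_student M M' (s : S) : option P :=
  match Ms M s, Ms M' s with
  | Some p, Some q => Some (if sprefers s p q then q else p)
  | Some p, None => Some p
  | None, Some q => Some q
  | None, None => None
  end.

Definition join M M' : {set S * P} :=
  [set x | vee_student M M' x.1 == Some x.2].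

End Defs.

(* Main.v *)
Require Import Defs.
From mathcomp Require Import all_boot zify.
Set Implicit Arguments.
Unset Strict Implicit.
Unset Printing Implicit Defensive.


Lemma card_sumb (T : finType) (X : pred T) : #|[set s | X s]| = \sum_s (X s : nat).
Proof.
rewrite -sum1_card big_mkcond /=; apply: eq_bigr => s _; rewrite inE; by case: (X s).
Qed.

Lemma sum_ind (S T : finType) (g : S -> option T) (Q : pred T) (X : pred S) :
  \sum_(t | Q t) #|[set s | (g s == Some t) && X s]| =
  #|[set s | (if g s is Some t then Q t else false) && X s]|.
Proof.
rewrite card_sumb.
under eq_bigr => t _ do rewrite card_sumb.
rewrite exchange_big /=; apply: eq_bigr => s _.
case E: (g s) => [t0|] /=.
- case Qt0: (Q t0).
  + rewrite (bigD1 t0) //= eqxx /= big1 ?addn0 // => t /andP[_ ne].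
    by rewrite (inj_eq (@Some_inj _)) eq_sym (negbTE ne).
  + rewrite big1 // => t Qt; rewrite (inj_eq (@Some_inj _)).
    by case: eqP => // ?; subst; rewrite Qt in Qt0.
- by rewrite big1.
Qed.

Lemma sum_le_eq (T : finType) (Q : pred T) (f g : T -> nat) :
  (forall t, Q t -> f t <= g t) -> \sum_(t | Q t) g t <= \sum_(t | Q t) f t ->
  forall t, Q t -> f t = g t.
Proof.
move=> le sle t Qt; apply/eqP; rewrite eqn_leq le //= leqNgt; apply/negP => lt.
have : \sum_(t | Q t) f t < \sum_(t | Q t) g t.
  rewrite (bigD1 t) //= [X in _ < X](bigD1 t) //=.
  rewrite -addSn leq_add //.
  by apply: leq_sum => i /andP[Qi _]; apply: le.
by rewrite ltnNge sle.
Qed.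


Section SPA.
Variables (S P L : finType) (I : SPAS S P L).
Local Notation off := (offerer I).

Definition rk l s := index s (lpref I l).
Definition fp (f : S -> option P) p : {set S} := [set s | f s == Some p].
Definition fl (f : S -> option P) l : {set S} := [set s | omap off (f s) == Some l].
Definition spo s p (o : option P) := if o is Some q then sprefers I s p q else true.
Definition NB f s p :=
  let l := off p in
  (#|fp f p| = pcap I p /\ forall t, t \in fp f p -> rk l t < rk l s) \/
  [/\ #|fp f p| < pcap I p, #|fl f l| = lcap I l, s \notin fl f l &
      forall t, t \in fl f l -> rk l t < rk l s].
Definition stablef f :=
  [/\ (forall s p, f s = Some p -> acceptable I s p),
      (forall p, #|fp f p| <= pcap I p), (forall l, #|fl f l| <= lcap I l) &
      (forall s p, acceptable I s p -> f s <> Some p -> spo s p (f s) -> NB f s p)].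
Definition better (m n : S -> option P) s : bool :=
  match m s, n s with
  | Some p, Some q => sprefers I s p q
  | Some _, None => true
  | _, _ => false end.
Definition vf (m n : S -> option P) s := if better m n s then n s else m s.

Lemma in_fp f p s : (s \in fp f p) = (f s == Some p).
Proof. by rewrite inE. Qed.
Lemma in_fl f l s : (s \in fl f l) = (omap off (f s) == Some l).
Proof. by rewrite inE. Qed.

Lemma rk_inj l s t : s \in lpref I l -> rk l t = rk l s -> t = s.
Proof.
move=> sin e.
have tin : t \in lpref I l.
  by rewrite -index_mem; move: e; rewrite /rk => ->; rewrite index_mem.
have := nth_index s tin; rewrite /rk in e; rewrite e nth_index //.
Qed.

Lemma fp_fl f p t : t \in fp f p -> t \in fl f (off p).
Proof. by rewrite !inE => /eqP ->. Qed.

Lemma NB_weak f s p : NB f s p -> forall t, t \in fp f p -> rk (off p) t < rk (off p) s.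
Proof.
case=> [[_ h]|[_ _ _ h]] t tin; first exact: h.
exact/h/fp_fl.
Qed.

Lemma NB_b f s p : NB f s p -> #|fp f p| < pcap I p ->
  [/\ #|fl f (off p)| = lcap I (off p), s \notin fl f (off p) &
      forall t, t \in fl f (off p) -> rk (off p) t < rk (off p) s].
Proof. by case=> [[e _]|[_ h1 h2 h3]]; [rewrite e ltnn|]. Qed.

Lemma acc_l s p : acceptable I s p -> s \in lpref I (off p).
Proof. by case/andP. Qed.
Lemma acc_s s p : acceptable I s p -> p \in spref I s.
Proof. by case/andP. Qed.

Section Pair1.
Variables m n : S -> option P.
Hypotheses (sm : stablef m) (sn : stablef n).

Lemma better_some s : better m n s -> exists p, m s = Some p.
Proof. rewrite /better; case: (m s) => [p|] //; by exists p. Qed.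

Lemma better_neq s p : better m n s -> m s = Some p -> n s <> Some p.
Proof.
move=> b e; move: b; rewrite /better e; case: (n s) => // q b [eq]; subst q.
by move: b; rewrite /sprefers ltnn.
Qed.

Lemma better_excl s : better m n s -> better n m s -> False.
Proof.
rewrite /better; case: (m s) => [p|]; case: (n s) => [q|] //.
rewrite /sprefers => h1 h2; have := ltn_trans h1 h2; by rewrite ltnn.
Qed.

Lemma trich s : ~~ better m n s -> ~~ better n m s -> m s = n s.
Proof.
case: sm => accm _ _ _; case: sn => accn _ _ _.
rewrite /better; case E1: (m s) => [p|]; case E2: (n s) => [q|] //.
have pin := acc_s (accm _ _ E1); have qin := acc_s (accn _ _ E2).
rewrite /sprefers -!leqNgt => h1 h2.
have e : index p (spref I s) = index q (spref I s) by apply/eqP; rewrite eqn_leq h1 h2.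
by rewrite -(nth_index p pin) e nth_index.
Qed.

Lemma R1 s p : better m n s -> m s = Some p -> NB n s p.
Proof.
move=> b e; case: sm => accm _ _ _; case: sn => _ _ _ nb.
apply: nb; first exact: accm.
  exact: better_neq.
move: b; rewrite /better e /spo; by case: (n s).
Qed.

End Pair1.

Section Pair2.
Variables m n : S -> option P.
Hypotheses (sm : stablef m) (sn : stablef n).

Lemma SL1 s u p : better m n s -> m s = Some p -> better n m u -> n u = Some p -> False.
Proof.
move=> bs es bu eu.
have h1 := NB_weak (R1 sm sn bs es); have h2 := NB_weak (R1 sn sm bu eu).
have := h1 u; have := h2 s; rewrite !in_fp es eu eqxx => a b.
have := ltn_trans (a isT) (b isT); by rewrite ltnn.
Qed.

Lemma PA s p t : better m n s -> m s = Some p -> t \in fp n p -> t \notin fp m p ->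
  better m n t.
Proof.
move=> bs es tn tm.
case bt: (better m n t) => //.
case bt': (better n m t).
  by move: tn; rewrite in_fp => /eqP e; case: (SL1 bs es bt' e).
move: tm; rewrite in_fp (trich sm sn (negbT bt) (negbT bt')).
by rewrite -in_fp tn.
Qed.

End Pair2.
End SPA.


Section SPA2.
Variables (S P L : finType) (I : SPAS S P L).
Local Notation off := (offerer I).
Local Notation fp := (@fp S P).
Local Notation fl := (fl I).

Lemma decomp (f : S -> option P) (X : {set S}) l :
  #|fl f l :&: X| = \sum_(p | off p == l) #|fp f p :&: X|.
Proof.
have := sum_ind f (fun p => off p == l) (mem X).
under eq_bigr => p _ do have -> : [set s | (f s == Some p) && (s \in X)] = fp f p :&: X
  by apply/setP => s; rewrite !inE.
move=> ->; apply: eq_card => s; rewrite !inE; by case: (f s).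
Qed.

Lemma decompD (f : S -> option P) (X : {set S}) l :
  #|fl f l :\: X| = \sum_(p | off p == l) #|fp f p :\: X|.
Proof.
rewrite setDE decomp; apply: eq_bigr => p _; by rewrite setDE.
Qed.

Lemma decomp_all (f : S -> option P) (X : {set S}) :
  \sum_l #|fl f l :&: X| = #|[set s | f s != None] :&: X|.
Proof.
have := sum_ind (fun s => omap off (f s)) predT (mem X).
under eq_bigr => l _ do have -> : [set s | (omap off (f s) == Some l) && (s \in X)] = fl f l :&: X
  by apply/setP => s; rewrite !inE.
move=> ->; apply: eq_card => s; rewrite !inE; by case: (f s).
Qed.

End SPA2.


Section SPA3.
Variables (S P L : finType) (I : SPAS S P L).
Local Notation off := (offerer I).
Local Notation fp := (@fp S P).
Local Notation fl := (fl I).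
Local Notation rk := (rk I).
Local Notation better := (better I).

Section Pair3.
Variables m n : S -> option P.
Hypotheses (sm : stablef I m) (sn : stablef I n).

Definition Aset := [set s | better m n s].

Definition caseB l : bool :=
  [exists s, if m s is Some p then [&& better m n s, off p == l & #|fp n p| < pcap I p]
             else false].

Lemma caseBP l : caseB l -> exists s' p', [/\ better m n s', m s' = Some p', off p' = l,
  #|fl n l| = lcap I l & forall t, t \in fl n l -> rk l t < rk l s'].
Proof.
case/existsP => s'; case E: (m s') => [p'|] // /and3P[b /eqP el lt].
have [h1 h2 h3] := NB_b (R1 sm sn b E) lt.
exists s', p'; split => //; rewrite -el //.
Qed.

Lemma not_caseB l s p : ~~ caseB l -> better m n s -> m s = Some p -> off p = l ->
  #|fp n p| = pcap I p.
Proof.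
move=> nc b e el; case: sn => _ cap _ _.
apply/eqP; rewrite eqn_leq cap /= leqNgt; apply/negP => lt.
by move/negP: nc; apply; apply/existsP; exists s; rewrite e b el eqxx lt.
Qed.

Lemma AmD p : fp m p :&: Aset \subset fp m p :\: fp n p.
Proof.
apply/subsetP => s; rewrite !inE => /andP[/eqP e b]; rewrite e eqxx andbT.
by apply/negP => /eqP; apply: (better_neq b e).
Qed.

Lemma Q1 s' p : ~~ caseB (off p) -> better m n s' -> m s' = Some p ->
  #|fp m p :\: fp n p| <= #|fp n p :&: Aset|.
Proof.
move=> nc b e.
have full := not_caseB nc b e erefl.
case: sm => _ capm _ _; have cm := capm p.
have sub : fp n p :\: fp m p \subset fp n p :&: Aset.
  apply/subsetP => t; rewrite !inE => /andP[tm tn]; rewrite tn /=.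
  apply: (PA sm sn b e); by rewrite in_fp.
have := subset_leq_card sub.
have := cardsID (fp n p) (fp m p); have := cardsID (fp m p) (fp n p).
rewrite setIC; lia.
Qed.

Lemma alpha_le_p p : ~~ caseB (off p) ->
  #|fp m p :&: Aset| <= #|fp n p :&: Aset|.
Proof.
move=> nc; case: (set_0Vmem (fp m p :&: Aset)) => [-> | [s]].
  by rewrite cards0.
rewrite !inE => /andP[/eqP e b].
exact: leq_trans (subset_leq_card (AmD p)) (Q1 nc b e).
Qed.

Lemma Q2a l q u : caseB l -> off q = l -> better n m u -> n u = Some q ->
  #|fp m q| = pcap I q /\ fp m q :\: Aset = fp m q.
Proof.
move=> cb eq bu eu; have [s' [p' [b' e' el' fulll rkl]]] := caseBP cb.
have nbm := R1 sn sm bu eu.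
split.
  case: nbm => [[//]|[_ _ _ h]].
  have s'm : s' \in fl m (off q) by rewrite in_fl e' /= el' eq.
  have := h _ s'm; have := rkl u; rewrite in_fl eu /= eq eqxx -eq => /(_ isT).
  move=> a c; have := ltn_trans a c; by rewrite ltnn.
apply/setP => t; rewrite !inE; case tm: (m t == Some q); rewrite ?andbF //= andbT.
apply/negP => bt.
case tn: (t \in fp n q).
  move: tn; rewrite in_fp => /eqP tn; move/eqP: tm => tm.
  by apply: (better_neq bt tm).
have tm' : t \in fp m q by rewrite in_fp tm.
have bt' := PA sn sm bu eu tm' (negbT tn).
exact: (better_excl bt bt').
Qed.

Lemma Q2 l q : caseB l -> off q = l -> #|fp n q :\: Aset| <= #|fp m q :\: Aset|.
Proof.
move=> cb eq.
case: (boolP [exists u, (u \in fp n q) && better n m u]).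
- case/existsP => u /andP[un bu].
  have eu : n u = Some q by move: un; rewrite in_fp => /eqP.
  have [fullm noA] := Q2a cb eq bu eu.
  rewrite noA fullm; case: sn => _ capn _ _.
  exact: leq_trans (subset_leq_card (subsetDl _ _)) (capn q).
- rewrite negb_exists => /forallP nb.
  apply: subset_leq_card; apply/subsetP => t; rewrite !inE => /andP[bt tn].
  rewrite bt /=; have := nb t; rewrite in_fp tn /= => bt'.
  by rewrite (trich sm sn bt bt').
Qed.

Lemma caseB_le l : caseB l -> #|fl m l| <= #|fl n l|.
Proof.
move=> cb; have [s' [p' [_ _ _ fulll _]]] := caseBP cb.
case: sm => _ _ capm _; by rewrite fulll capm.
Qed.

Lemma alpha_le l : #|fl m l :&: Aset| <= #|fl n l :&: Aset|.
Proof.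
case: (boolP (caseB l)) => cb.
- have := cardsID Aset (fl m l); have := cardsID Aset (fl n l).
  have := caseB_le cb.
  have : #|fl n l :\: Aset| <= #|fl m l :\: Aset|.
    rewrite !decompD; apply: leq_sum => q /eqP eq; exact: Q2 cb eq.
  lia.
- rewrite !decomp; apply: leq_sum => p /eqP el; apply: alpha_le_p; by rewrite el.
Qed.

Lemma sum_alpha : \sum_l #|fl m l :&: Aset| = #|Aset|.
Proof.
rewrite decomp_all; apply: eq_card => s; rewrite !inE.
case b: (better m n s); rewrite ?andbF ?andbT //.
by have [p ->] := better_some b.
Qed.

Lemma alpha_eq l : #|fl m l :&: Aset| = #|fl n l :&: Aset|.
Proof.
apply: (sum_le_eq (Q := predT) (f := fun l => #|fl m l :&: Aset|)
  (g := fun l => #|fl n l :&: Aset|)) => // [t _|]; first exact: alpha_le.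
rewrite sum_alpha decomp_all; apply: subset_leq_card; exact: subsetIr.
Qed.

Lemma A_assigned s : better m n s -> n s != None.
Proof.
move=> b.
have e : #|[set s | n s != None] :&: Aset| = #|Aset|.
  rewrite -(decomp_all I) -sum_alpha; apply: eq_bigr => l _; by rewrite alpha_eq.
have := subset_cardP e (subsetIr _ _) s; rewrite !inE b andbT => ->; done.
Qed.

End Pair3.
End SPA3.


Section SPA4.
Variables (S P L : finType) (I : SPAS S P L).
Local Notation off := (offerer I).
Local Notation fp := (@fp S P).
Local Notation fl := (fl I).
Local Notation rk := (rk I).
Local Notation better := (better I).

Section Pair4.
Variables m n : S -> option P.
Hypotheses (sm : stablef I m) (sn : stablef I n).
Local Notation A := (Aset I m n).
Local Notation cB := (caseB I m n).

Lemma alpha_p_eq p : ~~ cB (off p) -> #|fp m p :&: A| = #|fp n p :&: A|.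
Proof.
move=> nc.
apply: (sum_le_eq (Q := fun q => off q == off p) (f := fun q => #|fp m q :&: A|)
  (g := fun q => #|fp n q :&: A|)) => // [q /eqP e|].
  by apply: (alpha_le_p sm sn); rewrite e.
by rewrite -!decomp (alpha_eq sm sn).
Qed.

Lemma T1a p t : ~~ cB (off p) -> better m n t -> n t = Some p ->
  exists s', better m n s' /\ m s' = Some p.
Proof.
move=> nc bt et.
have : 0 < #|fp m p :&: A|.
  rewrite alpha_p_eq //; apply/card_gt0P; exists t; by rewrite !inE et eqxx bt.
case/card_gt0P => s'; rewrite !inE => /andP[/eqP e b]; by exists s'.
Qed.

Lemma T1b p s' u : ~~ cB (off p) -> better m n s' -> m s' = Some p ->
  better n m u -> m u = Some p -> False.
Proof.
move=> nc b e bu eu.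
have l1 := subset_leq_card (AmD I m n p).
have l2 := Q1 sm sn nc b e.
have l3 := alpha_p_eq nc.
have ceq : #|fp m p :&: A| = #|fp m p :\: fp n p| by lia.
have := subset_cardP ceq (AmD I m n p) u.
have uin : u \in fp m p :\: fp n p.
  rewrite !inE eu eqxx andbT; apply/negP => /eqP nu.
  exact: (better_neq bu nu eu).
rewrite uin !inE => /andP[_ bu'].
exact: (better_excl bu' bu).
Qed.

Lemma T2eq l q : cB l -> off q = l -> #|fp n q :\: A| = #|fp m q :\: A|.
Proof.
move=> cb eq.
apply: (sum_le_eq (Q := fun q => off q == l) (f := fun q => #|fp n q :\: A|)
  (g := fun q => #|fp m q :\: A|)) => //; first by move=> r /eqP e; exact: (Q2 sm sn cb e).
  2: by rewrite eq.
rewrite -!decompD.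
have := cardsID A (fl m l); have := cardsID A (fl n l).
have := caseB_le sm sn cb; have := alpha_eq sm sn l; lia.
Qed.

Lemma T2a q u : cB (off q) -> better n m u -> m u = Some q ->
  exists u', better n m u' /\ n u' = Some q.
Proof.
move=> cb bu eu.
case: (boolP [exists u', (n u' == Some q) && better n m u']).
  by case/existsP => u' /andP[/eqP e b]; exists u'.
rewrite negb_exists => /forallP nb; exfalso.
have sub : fp n q :\: A \proper fp m q :\: A.
  apply/properP; split.
    apply/subsetP => t; rewrite !inE => /andP[bt tn].
    rewrite bt /=; have := nb t; rewrite tn /= => bt'.
    by rewrite (trich sm sn bt bt').
  exists u; first by rewrite !inE eu eqxx andbT; apply/negP => b; apply: (better_excl b bu).
  rewrite !inE; apply/negP => /andP[_ /eqP nu]; exact: (better_neq bu nu eu).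
have := proper_card sub; rewrite (T2eq cb erefl) ltnn; done.
Qed.

Lemma T2b q u' t : cB (off q) -> better n m u' -> n u' = Some q ->
  better m n t -> n t = Some q -> False.
Proof.
move=> cb bu eu bt et.
have [fullm noA] := Q2a sm sn cb erefl bu eu.
have e := T2eq cb erefl; rewrite noA fullm in e.
case: sn => _ capn _ _.
have ceq : #|fp n q :\: A| = #|fp n q|.
  apply/eqP; rewrite eqn_leq subset_leq_card ?subsetDl //= e; exact: capn.
have := subset_cardP ceq (subsetDl _ _) t.
rewrite !inE et eqxx bt; done.
Qed.

Lemma SL2 p u s : better n m u -> m u = Some p -> better m n s ->
  m s = Some p \/ n s = Some p -> False.
Proof.
move=> bu eu bs [es|es]; case: (boolP (cB (off p))) => cb.
- have [u' [bu' eu']] := T2a cb bu eu; exact: (SL1 sm sn bs es bu' eu').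
- exact: (T1b cb bs es bu eu).
- have [u' [bu' eu']] := T2a cb bu eu; exact: (T2b cb bu' eu' bs es).
- have [s' [bs' es']] := T1a cb bs es; exact: (T1b cb bs' es' bu eu).
Qed.

End Pair4.
End SPA4.


Section SPA5.
Variables (S P L : finType) (I : SPAS S P L).
Local Notation off := (offerer I).
Local Notation fp := (@fp S P).
Local Notation fl := (fl I).
Local Notation rk := (rk I).
Local Notation better := (better I).

Lemma fp_ext f g p : f =1 g -> fp f p = fp g p.
Proof. by move=> e; apply/setP => s; rewrite !inE e. Qed.
Lemma fl_ext f g l : f =1 g -> fl f l = fl g l.
Proof. by move=> e; apply/setP => s; rewrite !inE e. Qed.
Lemma NB_ext f g s p : f =1 g -> NB I f s p -> NB I g s p.
Proof. by move=> e; rewrite /NB (fp_ext p e) (fl_ext (off p) e). Qed.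

Section Pair5.
Variables m n : S -> option P.
Hypotheses (sm : stablef I m) (sn : stablef I n).
Local Notation A := (Aset I m n).
Local Notation cB := (caseB I m n).
Local Notation v := (vf I m n).

Definition hasA p := [exists s, better m n s && ((m s == Some p) || (n s == Some p))].
Definition hasB p := [exists s, better n m s && ((m s == Some p) || (n s == Some p))].

Lemma K1 p : hasA p -> hasB p -> False.
Proof.
case/existsP => s /andP[bs es]; case/existsP => u /andP[bu eu].
case/orP: eu => /eqP eu.
  by apply: (SL2 sm sn bu eu bs); case/orP: es => /eqP es; [left|right].
case/orP: es => /eqP es.
  exact: (SL1 sm sn bs es bu eu).
by apply: (SL2 sn sm bs es bu); left.
Qed.

Lemma vf_sym : v =1 vf I n m.
Proof.
move=> s; rewrite /vf.
case b1: (better m n s); case b2: (better n m s) => //.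
  by case: (better_excl b1 b2).
by rewrite (trich sm sn (negbT b1) (negbT b2)).
Qed.

Lemma fp_v_m p : ~~ hasA p -> fp v p = fp m p.
Proof.
move=> nh; apply/setP => s; rewrite !inE /vf.
case b: (better m n s) => //.
move/existsP: nh => nh.
case E1: (n s == Some p); case E2: (m s == Some p) => //; exfalso; apply: nh;
  exists s; by rewrite b E1 ?E2 ?orbT.
Qed.

Lemma fp_v_n p : ~~ hasB p -> fp v p = fp n p.
Proof.
move=> nh; apply/setP => s; rewrite !inE /vf.
case b: (better m n s) => //.
case b': (better n m s).
  move/existsP: nh => nh.
  case E1: (n s == Some p); case E2: (m s == Some p) => //; exfalso; apply: nh;
    exists s; by rewrite b' E1 ?E2 ?orbT.
by rewrite (trich sm sn (negbT b) (negbT b')).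
Qed.

Lemma fl_v_card l : #|fl v l| = #|fl m l|.
Proof.
have e1 : fl v l :&: A = fl n l :&: A.
  by apply/setP => s; rewrite !inE /vf; case: (better m n s); rewrite ?andbF.
have e2 : fl v l :\: A = fl m l :\: A.
  by apply/setP => s; rewrite !inE /vf; case: (better m n s).
rewrite -(cardsID A (fl v l)) e1 e2 -(alpha_eq sm sn); exact: cardsID.
Qed.

End Pair5.

Section Pair6.
Variables m n : S -> option P.
Hypotheses (sm : stablef I m) (sn : stablef I n).
Local Notation A := (Aset I m n).
Local Notation cB := (caseB I m n).
Local Notation v := (vf I m n).

Lemma fl_v_card_n l : #|fl v l| = #|fl n l|.
Proof. by rewrite (fl_ext l (vf_sym sm sn)) (fl_v_card sn sm). Qed.

Lemma Wm l s : (forall t, t \in fl m l -> rk l t < rk l s) ->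
  forall t, t \in fl v l -> rk l t < rk l s.
Proof.
move=> h t; rewrite in_fl /vf; case bt: (better m n t); last by rewrite -in_fl; apply: h.
case et: (n t) => [q|] //= /eqP [eq].
case: (boolP (cB l)) => cb.
  have [s' [p' [b' e' el' fulll rkl]]] := caseBP sm sn cb.
  have := rkl t; rewrite in_fl et /= eq eqxx => /(_ isT) a.
  have := h s'; rewrite in_fl e' /= el' eqxx => /(_ isT); exact: ltn_trans.
rewrite -eq in cb; have [s'' [b'' e'']] := T1a sm sn cb bt et.
have tin : t \in fp n q by rewrite in_fp et.
have a := NB_weak (R1 sm sn b'' e'') tin; rewrite eq in a.
have := h s''; rewrite in_fl e'' /= eq eqxx => /(_ isT); exact: ltn_trans.
Qed.

End Pair6.

Section Pair7.
Variables m n : S -> option P.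
Hypotheses (sm : stablef I m) (sn : stablef I n).
Local Notation A := (Aset I m n).
Local Notation cB := (caseB I m n).
Local Notation v := (vf I m n).

Lemma Wn l s : (forall t, t \in fl n l -> rk l t < rk l s) ->
  forall t, t \in fl v l -> rk l t < rk l s.
Proof.
move=> h t; rewrite (fl_ext l (vf_sym sm sn)); exact: (Wm sn sm h).
Qed.

End Pair7.
End SPA5.


Section SPA6.
Variables (S P L : finType) (I : SPAS S P L).
Local Notation off := (offerer I).
Local Notation fp := (@fp S P).
Local Notation fl := (fl I).
Local Notation rk := (rk I).
Local Notation better := (better I).

Section Pair8.
Variables m n : S -> option P.
Hypotheses (sm : stablef I m) (sn : stablef I n).
Local Notation A := (Aset I m n).
Local Notation cB := (caseB I m n).
Local Notation v := (vf I m n).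

Lemma NBv_m s p : ~~ better m n s -> acceptable I s p -> m s <> Some p ->
  spo I s p (m s) -> NB I v s p.
Proof.
move=> nb acc ne pr.
have vs : v s = m s by rewrite /vf (negbTE nb).
have nbm : NB I m s p by case: sm => _ _ _ h; apply: h.
have capv : #|fp v p| <= pcap I p.
  case: (boolP (hasA I m n p)) => hA.
    have hB : ~~ hasB I m n p by apply/negP => hB; apply: (K1 sm sn hA hB).
    rewrite (fp_v_n sm sn hB); by case: sn.
  rewrite (fp_v_m hA); by case: sm.
case: nbm => [[fullm ltm]|[ltm fulll snl rkl]]; last first.
  have rkv := Wm sm sn rkl.
  case: (ltngtP #|fp v p| (pcap I p)) => c; last 1 first.
  - left; split => // t tin; apply: rkv; exact: fp_fl.
  - right; split => //; first by rewrite (fl_v_card sm sn).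
    by rewrite in_fl vs -in_fl.
  - by move: capv; rewrite leqNgt c.
case: (boolP (hasA I m n p)) => hA; last first.
  by left; rewrite (fp_v_m hA).
have hB : ~~ hasB I m n p by apply/negP => hB; apply: (K1 sm sn hA hB).
rewrite /NB (fp_v_n sm sn hB).
case: (boolP [exists s', better m n s' && (m s' == Some p)]) => ex.
- case/existsP: ex => s' /andP[b' /eqP e'].
  have nbn := R1 sm sn b' e'.
  have s'lt : rk (off p) s' < rk (off p) s by apply: ltm; rewrite in_fp e'.
  case: sn => _ capn _ _.
  case: (ltngtP #|fp n p| (pcap I p)) => c; last 1 first.
  + left; split => // t tin; apply: ltn_trans s'lt; exact: (NB_weak nbn).
  + have [fulln s'nl rkn] := NB_b nbn c.
    have rkn' : forall t, t \in fl n (off p) -> rk (off p) t < rk (off p) s.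
      by move=> t tin; apply: ltn_trans s'lt; apply: rkn.
    right; split => //; first by rewrite (fl_v_card_n sm sn).
      rewrite in_fl vs; apply/negP => /eqP.
      case es: (m s) => [q|] //= [eq].
      have cb : cB (off q).
        apply/existsP; exists s'; rewrite e' b' eq eqxx /=; exact: c.
      case: (boolP (better n m s)) => bs.
        have [u' [bu' eu']] := T2a sm sn cb bs es.
        have sin : s \in fp m q by rewrite in_fp es.
        have a := NB_weak (R1 sn sm bu' eu') sin.
        have := rkn' u'; rewrite in_fl eu' /= eq eqxx => /(_ isT).
        rewrite eq in a; move=> b; have := ltn_trans a b; by rewrite ltnn.
      have := rkn' s; rewrite in_fl -(trich sm sn nb bs) es /= eq eqxx => /(_ isT).
      by rewrite ltnn.
    exact: (Wn sm sn rkn').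
  + by move: (capn p); rewrite leqNgt c.
- rewrite negb_exists in ex; move/forallP: ex => ex.
  have sub : fp m p \subset fp n p.
    apply/subsetP => t; rewrite !in_fp => /eqP et.
    have bt : ~~ better m n t by have := ex t; rewrite et eqxx andbT.
    have bt' : ~~ better n m t.
      apply/negP => bt'; move/existsP: hB; apply; exists t; by rewrite bt' et eqxx.
    by rewrite -(trich sm sn bt bt') et.
  have ceq : #|fp m p| = #|fp n p|.
    apply/eqP; rewrite eqn_leq subset_leq_card //= fullm; by case: sn.
  left; split; first by rewrite -ceq.
  move=> t tin; apply: ltm; by rewrite (subset_cardP ceq sub t).
Qed.

End Pair8.

Section Pair9.
Variables m n : S -> option P.
Hypotheses (sm : stablef I m) (sn : stablef I n).
Local Notation v := (vf I m n).

Lemma stable_v : stablef I v.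
Proof.
split.
- move=> s p; rewrite /vf; case: (better m n s).
  + by case: sn => h _ _ _; apply: h.
  + by case: sm => h _ _ _; apply: h.
- move=> p; case: (boolP (hasA I m n p)) => hA.
    have hB : ~~ hasB I m n p by apply/negP => hB; apply: (K1 sm sn hA hB).
    rewrite (fp_v_n sm sn hB); by case: sn.
  rewrite (fp_v_m hA); by case: sm.
- move=> l; rewrite (fl_v_card sm sn); by case: sm.
- move=> s p acc ne pr.
  case: (boolP (better m n s)) => b.
    have nb' : ~~ better n m s by apply/negP => b'; apply: (better_excl b b').
    apply: (NB_ext (g := v) (f := vf I n m)); first by move=> x; rewrite (vf_sym sm sn).
    have e : vf I n m s = n s by rewrite /vf (negbTE nb').
    apply: (NBv_m sn sm nb' acc); rewrite -e -(vf_sym sm sn) //.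
  have e : v s = m s by rewrite /vf (negbTE b).
  apply: (NBv_m sm sn b acc); rewrite -e //.
Qed.

End Pair9.
End SPA6.


Section SPA7.
Variables (S P L : finType) (I : SPAS S P L).
Local Notation off := (offerer I).
Local Notation fp := (@fp S P).
Local Notation fl := (fl I).
Local Notation rk := (rk I).

Lemma Ms_spec (M : {set S * P}) : (forall s, #|[set p | (s, p) \in M]| <= 1) ->
  forall s p, ((s, p) \in M) = (Ms M s == Some p).
Proof.
move=> c1 s p; rewrite /Ms; case: pickP => [q hq|none].
  apply/idP/idP => [h|/eqP [<-] //].
  have := card_le1_eqP (c1 s); move=> /(_ q p); rewrite !inE => /(_ hq h) ->; done.
by rewrite none.
Qed.

Lemma Mp_fp (M : {set S * P}) p : (forall s, #|[set p | (s, p) \in M]| <= 1) ->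
  Mp M p = fp (Ms M) p.
Proof. by move=> c1; apply/setP => s; rewrite !inE (Ms_spec c1). Qed.

Lemma Ml_fl (M : {set S * P}) l : (forall s, #|[set p | (s, p) \in M]| <= 1) ->
  Ml I M l = fl (Ms M) l.
Proof.
move=> c1; apply/setP => s; rewrite !inE.
apply/existsP/idP => [[p /andP[]]|].
  by rewrite (Ms_spec c1) => /eqP -> /= /eqP ->.
case E: (Ms M s) => [p|] //= /eqP [el]; exists p; by rewrite (Ms_spec c1) E el !eqxx.
Qed.

Lemma ptw_le l s (X : {set S}) : ~~ prefers_to_worst I l s X ->
  forall t, t \in X -> rk l t <= rk l s.
Proof.
rewrite /prefers_to_worst /worst; case: pickP => [w /andP[wX /forallP hw]|none].
  rewrite /lprefers -leqNgt => ws t tX.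
  have := hw t; rewrite tX /= => tw; exact: leq_trans tw ws.
move=> _ t tX.
case: (@arg_maxnP _ t (mem X) (fun x => index x (lpref I l)) tX) => w wX hw.
have wX2 : w \in X := wX.
have := none w; rewrite wX2 /=; move/negP; case; apply/forallP => x; apply/implyP.
exact: hw.
Qed.

Lemma ptw_of l s (X : {set S}) : (forall t, t \in X -> rk l t < rk l s) ->
  ~~ prefers_to_worst I l s X.
Proof.
move=> h; rewrite /prefers_to_worst /worst; case: pickP => [w /andP[wX _]|//].
rewrite /lprefers -leqNgt; apply: ltnW; exact: h.
Qed.

Lemma lt_of_le l s t : s \in lpref I l -> t != s -> rk l t <= rk l s -> rk l t < rk l s.
Proof.
move=> sin ne le; rewrite ltn_neqAle le andbT; apply/negP => /eqP e.
by move/negP: ne; apply; apply/eqP; apply: (rk_inj sin).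
Qed.

Lemma stable_to (M : {set S * P}) : stable I M -> stablef I (Ms M).
Proof.
case=> [[acc c1 cp cl] nb].
split.
- move=> s p e; have : (s, p) \in M by rewrite (Ms_spec c1) e.
  by move/acc.
- by move=> p; rewrite -Mp_fp.
- by move=> l; rewrite -Ml_fl.
- move=> s p a ne pr.
  have := nb s p; rewrite /blocks a (Ms_spec c1) /=.
  have -> : (Ms M s == Some p) = false by apply/negP => /eqP.
  rewrite /= -/(spo I s p (Ms M s)) pr /= (Mp_fp _ c1) (Ml_fl _ c1).
  have sin := acc_l a.
  have cpp := cp p; rewrite (Mp_fp _ c1) in cpp.
  have cll := cl (off p); rewrite (Ml_fl _ c1) in cll.
  case: (ltngtP #|fp (Ms M) p| (pcap I p)) => c; last 1 first.
  + rewrite /= => hp.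
    left; split => // t tin; apply: (lt_of_le sin).
      by apply/negP => /eqP ?; subst t; move: tin; rewrite in_fp => /eqP /ne.
    exact: (ptw_le hp).
  + rewrite /=.
    case: (ltngtP #|fl (Ms M) (off p)| (lcap I (off p))) => c2 //=.
      by move: cll; rewrite leqNgt c2.
    rewrite /= orbF => /norP[snl hp].
    right; split => //.
    move=> t tin; apply: (lt_of_le sin).
      by apply/negP => /eqP ?; subst t; rewrite tin in snl.
    exact: (ptw_le hp).
  + by move: cpp; rewrite leqNgt c.
Qed.

Lemma stable_from (J : {set S * P}) f : (forall s p, ((s, p) \in J) = (f s == Some p)) ->
  stablef I f -> stable I J.
Proof.
move=> spec [acc cp cl nb].
have Msf : forall s, Ms J s = f s.
  move=> s; rewrite /Ms; case: pickP => [q|none]; first by rewrite spec => /eqP.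
  by case E: (f s) => [q|] //; have := none q; rewrite spec E eqxx.
have c1 : forall s, #|[set p | (s, p) \in J]| <= 1.
  move=> s; apply/card_le1_eqP => p q; rewrite !inE !spec => /eqP -> /eqP [->]; done.
have Mpe : forall p, Mp J p = fp f p.
  by move=> p; rewrite (Mp_fp _ c1); apply: fp_ext.
have Mle : forall l, Ml I J l = fl f l.
  by move=> l; rewrite (Ml_fl _ c1); apply: fl_ext.
split; first split.
- by case=> s p; rewrite spec => /eqP /acc.
- exact: c1.
- by move=> p; rewrite Mpe.
- by move=> l; rewrite Mle.
- move=> s p; rewrite /blocks spec Msf Mpe Mle.
  case a: (acceptable I s p) => //=.
  case ne: (f s == Some p) => //=.
  case pr: (if f s is Some q then sprefers I s p q else true) => //=.
  have := nb s p a (fun e => ltac:(by move: ne; rewrite e eqxx)) pr.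
  case=> [[c h]|[c c2 snl h]].
    rewrite c ltnn eqxx /=; exact: ptw_of.
  rewrite c /= c2 ltnn eqxx (negbTE snl) /= (negbTE (ptw_of h)) /=.
  by rewrite ltn_eqF.
Qed.

End SPA7.

Unset Implicit Arguments.

Theorem lemma12 (S P L : finType) (I : SPAS S P L) (M M' : {set S * P}) :
  wf_SPAS I -> stable I M -> stable I M' -> stable I (join I M M').
Proof.
move=> _ sM sM'.
have sm := stable_to sM; have sn := stable_to sM'.
apply: (stable_from (f := vf I (Ms M) (Ms M'))); last exact: stable_v.
move=> s p; rewrite /join inE /=; congr (_ == _).
rewrite /vee_student /vf /better.
case E1: (Ms M s) => [p1|]; case E2: (Ms M' s) => [p2|] //.
- by case: (sprefers I s p1 p2).
- have b : better I (Ms M) (Ms M') s by rewrite /better E1 E2.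
  by have := A_assigned sm sn b; rewrite E2.
- have b : better I (Ms M') (Ms M) s by rewrite /better E1 E2.
  by have := A_assigned sn sm b; rewrite E1.
Qed.
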